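(* Let $n\ge2$ and $\Gamma_n=\langle c,\mu\mid c^n\mu^{-3}c^n\mu^{-1}=1\rangle$ (the fundamental group of the 3-manifold $M_n$ obtained by gluing the exterior of the $(2,2n)$-torus link to the orientable $I$-bundle over the Klein bottle). Embed $X(\Gamma_n,\mathrm{SL}_2(\mathbb C))_{\mathrm{red}}$ in $\mathbb C^3$ via the coordinates $(t_c,t_\mu,t_{c\mu})$, and for $k=1,\dots,n-1$ let $$Y_k=\{(t_c,t_\mu,t_{c\mu})\in\mathbb C^3\mid t_\mu=0,\ t_c=2\cos(\pi k/n)\}.$$ Then each $Y_k$ is contained in $X(\Gamma_n,\mathrm{SL}_2(\mathbb C))_{\mathrm{red}}$ and is an irreducible component of it containing characters of simple representations.
   Context: $X(\Gamma,\mathrm{SL}_2(\mathbb C))_{\mathrm{red}}$ is the $\mathrm{SL}_2(\mathbb C)$-character variety (reduced character scheme) of $\Gamma$; $t_\gamma$ is the trace function of $\gamma$, and for a two-generated group the functions $t_c,t_\mu,t_{c\mu}$ generate the coordinate ring. A representation $\rho$ is simple if $\rho(\Gamma)$ spans $M_2(\mathbb C)$ linearly. *)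

(* Defs.v *)
From HB Require Import structures.
From mathcomp Require Import all_boot all_order all_algebra.
From mathcomp Require Import complex.
From mathcomp Require Import reals trigo.
Set Implicit Arguments. Unset Strict Implicit. Unset Printing Implicit Defensive.
Import Order.TTheory GRing.Theory Num.Theory.
Local Open Scope ring_scope.

Section Defs.
Variable R : realType.
Local Notation C := R[i].

Definition pt := (C * C * C)%type.

(* polynomials in three variables, as iterated univariate polynomials *)
Definition poly3 := {poly {poly {poly C}}}.
Definition eval3 (p : poly3) (x : pt) : C :=
  ((p.[(x.2%:P)%:P]).[x.1.2%:P]).[x.1.1].

Definition zclosed (Z : pt -> Prop) : Prop :=
  exists S : poly3 -> Prop, forall x, Z x <-> (forall p, S p -> eval3 p x = 0).

Definition subsetP3 (A B : pt -> Prop) := forall x, A x -> B x.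

Definition zirreducible (Z : pt -> Prop) : Prop :=
  zclosed Z /\ (exists x, Z x) /\
  forall Z1 Z2, zclosed Z1 -> zclosed Z2 ->
    (forall x, Z x <-> (Z1 x \/ Z2 x)) ->
    (forall x, Z x <-> Z1 x) \/ (forall x, Z x <-> Z2 x).

Definition irr_component (X Y : pt -> Prop) : Prop :=
  zirreducible Y /\ subsetP3 Y X /\
  forall Z, zirreducible Z -> subsetP3 Y Z -> subsetP3 Z X ->
    forall x, Z x <-> Y x.

(* representations of Gamma_n = < c, mu | c^n mu^-3 c^n mu^-1 = 1 > into SL_2(C):
   rho is determined by A = rho(c), B = rho(mu) *)
Definition is_rep (n : nat) (A B : 'M[C]_2) : Prop :=
  \det A = 1 /\ \det B = 1 /\
  A ^+ n * (B ^+ 3)^-1 * A ^+ n * B^-1 = 1.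

Inductive in_image (A B : 'M[C]_2) : 'M[C]_2 -> Prop :=
| img1 : in_image A B 1
| imgA M : in_image A B M -> in_image A B (A * M)
| imgB M : in_image A B M -> in_image A B (B * M)
| imgAV M : in_image A B M -> in_image A B (A^-1 * M)
| imgBV M : in_image A B M -> in_image A B (B^-1 * M).

(* rho is simple: rho(Gamma) spans M_2(C) linearly *)
Definition simple_rep (A B : 'M[C]_2) : Prop :=
  exists s : seq 'M[C]_2, (forall M, M \in s -> in_image A B M) /\
    (<<s>>%VS = fullv).

Definition char_pt (A B : 'M[C]_2) : pt := (\tr A, \tr B, \tr (A * B)).

Definition charvar (n : nat) : pt -> Prop :=
  fun x => exists A B, is_rep n A B /\ char_pt A B = x.

Definition Yk (n k : nat) : pt -> Prop :=
  fun x => x.1.2 = 0 /\ x.1.1 = Complex (2 * cos (pi * k%:R / n%:R)) 0.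

End Defs.

Arguments Yk R n k : clear implicits.
Arguments charvar R n : clear implicits.

(* Main.v *)
Require Import Defs.
From HB Require Import structures.
From mathcomp Require Import all_boot all_order all_algebra.
From mathcomp Require Import complex.
From mathcomp Require Import reals trigo.
From mathcomp Require Import ring zify.
From Stdlib Require Import Classical.
Import Order.TTheory GRing.Theory Num.Theory.
Local Open Scope ring_scope.
Set Implicit Arguments. Unset Strict Implicit.

Lemma det22 (F : comNzRingType) (A : 'M[F]_2) : \det A = A 0 0 * A 1 1 - A 0 1 * A 1 0.
Proof.
rewrite (expand_det_row _ 0) !big_ord_recl big_ord0 /cofactor !det_mx11 !mxE /=.
have l1 : lift (0:'I_2) (0:'I_1) = 1 by apply/val_inj.
have l2 : lift (ord0:'I_2) (0:'I_1) = 1 by apply/val_inj.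
have l3 : lift (lift (ord0:'I_2) (ord0 : 'I_1)) (0:'I_1) = 0 by apply/val_inj.
have l4 : lift (ord0:'I_2) (ord0 : 'I_1) = 1 by apply/val_inj.
have l5 : lift (1:'I_2) (0:'I_1) = 0 by apply/val_inj.
have l6 : (ord0 : 'I_2) = 0 by apply/val_inj.
rewrite ?l1 ?l2 ?l3 ?l4 /= ?expr0 ?expr1 ?addr0 l5 l6; ring.
Qed.
Lemma ord0E : (ord0 : 'I_2) = 0. Proof. exact/val_inj. Qed.
Lemma lift1E : lift (ord0 : 'I_2) (ord0 : 'I_1) = 1. Proof. exact/val_inj. Qed.
Lemma tr22 (F : comNzRingType) (A : 'M[F]_2) : \tr A = A 0 0 + A 1 1.
Proof. by rewrite /mxtrace !big_ord_recl big_ord0 addr0 lift1E ord0E. Qed.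
Lemma mul22 (F : comNzRingType) (A B : 'M[F]_2) i j : (A * B) i j = A i 0 * B 0 j + A i 1 * B 1 j.
Proof. by rewrite !mxE !big_ord_recl big_ord0 addr0 lift1E ord0E. Qed.
Lemma eq22 (F : comNzRingType) (A B : 'M[F]_2) :
  A 0 0 = B 0 0 -> A 0 1 = B 0 1 -> A 1 0 = B 1 0 -> A 1 1 = B 1 1 -> A = B.
Proof.
move=> h1 h2 h3 h4; apply/matrixP => i j.
have Ei : i = 0 \/ i = 1.
  by case: i => -[|[|i]] Hi //; [left|right]; apply/val_inj.
have Ej : j = 0 \/ j = 1.
  by case: j => -[|[|j]] Hj //; [left|right]; apply/val_inj.
by case: Ei => ->; case: Ej => ->.
Qed.
Definition mk22 (F : comNzRingType) (a b c d : F) : 'M[F]_2 :=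
  \matrix_(i < 2, j < 2) if i == 0 then (if j == 0 then a else b) else (if j == 0 then c else d).
Lemma mk22E (F : comNzRingType) (a b c d : F) :
  (mk22 a b c d 0 0 = a) * (mk22 a b c d 0 1 = b) * (mk22 a b c d 1 0 = c) * (mk22 a b c d 1 1 = d).
Proof. by rewrite !mxE. Qed.
Lemma one22 (F : comNzRingType) : (1 : 'M[F]_2) = mk22 1 0 0 1.
Proof. by apply: eq22; rewrite !mxE. Qed.
Ltac ent := apply: eq22; rewrite ?(mul22, tr22, det22, mxE) /=; ring.
Lemma CH22 (F : fieldType) (A : 'M[F]_2) : A * A = \tr A *: A - \det A *: 1.
Proof. ent. Qed.
Lemma anti22 (F : fieldType) (X Y : 'M[F]_2) :
  X * Y + Y * X = \tr X *: Y + \tr Y *: X + (\tr (X * Y) - \tr X * \tr Y) *: 1.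
Proof. ent. Qed.
Lemma detlin22 (F : fieldType) (A : 'M[F]_2) p q :
  \det (p *: A + q *: 1) = p ^+ 2 * \det A + p * q * \tr A + q ^+ 2.
Proof. rewrite ?(mul22, tr22, det22, mxE) /=; ring. Qed.
Lemma trlin22 (F : fieldType) (A : 'M[F]_2) p q :
  \tr (p *: A + q *: 1) = p * \tr A + 2 * q.
Proof. rewrite ?(mul22, tr22, det22, mxE) /=; ring. Qed.
Lemma trlin22b (F : fieldType) (A : 'M[F]_2) p q :
  \tr (A * (p *: A + q *: 1)) = p * (\tr A ^+ 2 - 2 * \det A) + q * \tr A.
Proof. rewrite ?(mul22, tr22, det22, mxE) /=; ring. Qed.
Lemma unit22 (F : fieldType) (A : 'M[F]_2) : \det A = 1 -> A \is a GRing.unit.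
Proof. by move=> h; rewrite unitmxE h unitr1. Qed.
Lemma inv22 (F : fieldType) (A : 'M[F]_2) : \det A = 1 -> A^-1 = \tr A *: 1 - A.
Proof.
move=> h; have hu := unit22 h.
have e : A * (\tr A *: 1 - A) = 1.
  rewrite mulrBr CH22 h scale1r. rewrite -scalerAr mulr1. rewrite opprB addrC subrK. by [].
by rewrite -[RHS](mulKr hu) e mulr1.
Qed.
Lemma detM22 (F : fieldType) (A B : 'M[F]_2) : \det (A * B) = \det A * \det B.
Proof. exact: det_mulmx. Qed.
Lemma detX22 (F : fieldType) (A : 'M[F]_2) m : \det (A ^+ m) = \det A ^+ m.
Proof. elim: m => [|m ih]; first by rewrite !expr0 det1. by rewrite !exprS detM22 ih. Qed.
Lemma sq_m1 (F : fieldType) (M : 'M[F]_2) : \det M = 1 -> M * M = - 1 -> \tr M = 0.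
Proof.
move=> hd; rewrite CH22 hd scale1r => /eqP; rewrite subr_eq addrC subrr scaler_eq0.
case/orP => /eqP // M0; move: hd; rewrite M0 det0 => h0. by move: (@oner_neq0 F); rewrite h0 eqxx.
Qed.
Definition kappa (F : comNzRingType) (x y z : F) := x ^+ 2 + y ^+ 2 + z ^+ 2 - x * y * z - 4.
Lemma kappa_lin (F : fieldType) (A : 'M[F]_2) p q :
  \det A = 1 -> \det (p *: A + q *: 1) = 1 ->
  kappa (\tr A) (\tr (p *: A + q *: 1)) (\tr (A * (p *: A + q *: 1))) = 0.
Proof.
move=> hA; rewrite detlin22 trlin22 trlin22b hA /kappa => h.
have -> : 0 = (\tr A ^+ 2 - 4) * (1 - (p ^+ 2 * 1 + p * q * \tr A + q ^+ 2)) by rewrite h subrr mulr0.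
ring.
Qed.
Fixpoint cheb (F : comNzRingType) (m : nat) : {poly F} :=
  match m with 0 => 0 | 1 => 1 | (S m' as m1).+1 => 'X * cheb F m1 - cheb F m' end.
Lemma chebSS (F : comNzRingType) m : cheb F m.+2 = 'X * cheb F m.+1 - cheb F m.
Proof. by []. Qed.
Lemma chebA (F : fieldType) (A : 'M[F]_2) m : \det A = 1 ->
  A ^+ m.+1 = (cheb F m.+1).[\tr A] *: A - (cheb F m).[\tr A] *: 1.
Proof.
move=> hA; elim: m => [|m ih].
  by rewrite expr1 /= hornerC horner0 scale1r scale0r subr0.
rewrite exprS ih chebSS hornerD hornerN hornerM hornerX mulrBr -!scalerAr mulr1 CH22 hA scale1r.
set u := (cheb F m.+1).[_]; set v := (cheb F m).[_]; set t := \tr A.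
apply: eq22; rewrite !mxE /=; ring.
Qed.
Lemma cheb2 (F : comNzRingType) m : (cheb F m).[2] = m%:R /\ (cheb F m.+1).[2] = m.+1%:R.
Proof.
elim: m => [|m [h1 h2]]; first by split; rewrite /= ?hornerC ?horner0.
split=> //; rewrite chebSS hornerD hornerN hornerM hornerX h1 h2.
have -> : (2 : F) = 2%:R by []. rewrite -!natrM -natrB; last by lia. congr (_%:R); lia.
Qed.
Lemma detsc22 (F : fieldType) (c : F) : \det (c *: (1 : 'M[F]_2)) = c ^+ 2.
Proof. rewrite det22 !mxE /=; ring. Qed.
Lemma case_nz (F : fieldType) (n : nat) (A B : 'M[F]_2) :
  \det A = 1 -> \det B = 1 -> A ^+ n.+1 * (B ^+ 3)^-1 * A ^+ n.+1 * B^-1 = 1 ->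
  \tr B != 0 -> kappa (\tr A) (\tr B) (\tr (A * B)) = 0.
Proof.
move=> hA hB rel tB0.
have uB := unit22 hB.
set P := A ^+ n.+1. set Bi := B^-1.
have hBi : \det Bi = 1 by rewrite -[LHS]mul1r -{1}hB -detM22 mulrV // det1.
set X := P * Bi ^+ 2.
have hX : \det X = 1 by rewrite detM22 detX22 hA detX22 hBi !expr1n mulr1.
have XY : X * (Bi * X * B) = 1.
  have e : Bi ^+ 2 * B = Bi by rewrite expr2 -mulrA mulVr // mulr1.
  rewrite -rel -exprVn -/Bi /X !mulrA.
  by rewrite -(mulrA _ Bi B) mulVr // mulr1.
have defX : X = P * Bi ^+ 2 by [].
clearbody X.
have uX := unit22 hX.
have Yinv : Bi * X * B = \tr X *: 1 - X.
  by rewrite -inv22 // -[LHS](mulKr uX) XY mulr1.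
have XB : X * B + B * X = \tr X *: B.
  have h1 : B * (Bi * X * B) = X * B by rewrite !mulrA mulrV // mul1r.
  by rewrite -h1 Yinv mulrBr -scalerAr mulr1 subrK.
move: XB; rewrite anti22 => /eqP; rewrite -subr_eq0.
rewrite (_ : _ - _ = \tr B *: X + (\tr (X * B) - \tr X * \tr B) *: 1); last first.
  by rewrite addrC !addrA addNr add0r.
rewrite addr_eq0 => /eqP eX.
set c := - (\tr (X * B) - \tr X * \tr B) / \tr B.
have Xc : X = c *: 1.
  by rewrite /c mulrC -scalerA scaleNr -eX scalerA mulVf // scale1r.
have c2 : c ^+ 2 = 1 by rewrite -detsc22 -Xc.
have c0 : c != 0 by apply/eqP => c0; move: c2; rewrite c0 expr0n /= => /eqP; rewrite eq_sym oner_eq0.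
have PX : P = X * (B * B).
  by rewrite defX expr2 !mulrA -(mulrA _ Bi B) mulVr // mulr1 -(mulrA _ Bi B) mulVr // mulr1.
have PB : P = (c * \tr B) *: B - c *: 1.
  by rewrite PX Xc -scalerAl mul1r CH22 hB scale1r scalerBr scalerA.
have Bpq : B = ((c * \tr B)^-1 * (cheb F n.+1).[\tr A]) *: A
   + ((c * \tr B)^-1 * (c - (cheb F n).[\tr A])) *: 1.
  have cb0 : c * \tr B != 0 by rewrite mulf_neq0.
  apply: (scalerI cb0).
  rewrite scalerDr !scalerA !mulrA mulfV // !mul1r scalerBl.
  have -> : (c * \tr B) *: B = P + c *: 1 by rewrite PB subrK.
  by rewrite /P chebA // addrAC addrA.
rewrite Bpq; apply: kappa_lin => //; by rewrite -Bpq.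
Qed.
Lemma case_z (F : fieldType) (n : nat) (A B : 'M[F]_2) :
  \det A = 1 -> \det B = 1 -> A ^+ n.+1 * (B ^+ 3)^-1 * A ^+ n.+1 * B^-1 = 1 ->
  \tr B = 0 -> (cheb F n.+1).[\tr A] * \tr (A * B) = 0.
Proof.
move=> hA hB rel tB0.
have Bi : B^-1 = - B by rewrite inv22 // tB0 scale0r sub0r.
have BB : B * B = - 1 by rewrite CH22 tB0 hB scale0r scale1r sub0r.
have B3 : (B ^+ 3)^-1 = B.
  by rewrite -exprVn Bi exprS expr2 mulrNN BB mulrN1 opprK.
set P := A ^+ n.+1.
have PB : (P * B) * (P * B) = - 1.
  by move: rel; rewrite -/P B3 Bi mulrN !mulrA => /(congr1 (fun x => - x)); rewrite opprK.
have hPB : \det (P * B) = 1 by rewrite detM22 detX22 hA hB expr1n mulr1.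
have := sq_m1 hPB PB.
rewrite /P chebA // mulrBl -!scalerAl mul1r !linearD !linearN !linearZ /= tB0 mulr0 subr0.
by [].
Qed.
Lemma exists_nonroot (F : numDomainType) (p : {poly F}) : p != 0 -> exists t, p.[t] != 0.
Proof.
move=> p0; apply/not_all_not_ex => /= hall.
pose rs := [seq (i%:R : F) | i <- iota 0 (size p)].
have h1 : all (root p) rs.
  by apply/allP => x /mapP [i _ ->]; rewrite /root; apply/negbNE/negP/hall.
have h2 : uniq rs.
  by rewrite map_inj_uniq ?iota_uniq // => i j /eqP; rewrite eqr_nat => /eqP.
by have := max_poly_roots p0 h1 h2; rewrite size_map size_iota ltnn.
Qed.
Section P3.
Variable R : realType.
Local Notation C := R[i].
Definition Tc : poly3 R := ('X%:P)%:P.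
Definition Tm : poly3 R := ('X)%:P.
Definition Tcm : poly3 R := 'X.
Definition cst (c : C) : poly3 R := ((c%:P)%:P)%:P.
Definition liftc (r : {poly C}) : poly3 R := (r%:P)%:P.
Lemma evTc x : eval3 Tc x = x.1.1. Proof. by rewrite /eval3 /Tc !hornerE. Qed.
Lemma evTm x : eval3 Tm x = x.1.2. Proof. by rewrite /eval3 /Tm !hornerE. Qed.
Lemma evTcm x : eval3 Tcm x = x.2. Proof. by rewrite /eval3 /Tcm !hornerE. Qed.
Lemma evcst c x : eval3 (cst c) x = c. Proof. by rewrite /eval3 /cst !hornerE. Qed.
Lemma evlift r x : eval3 (liftc r) x = r.[x.1.1]. Proof. by rewrite /eval3 /liftc !hornerE. Qed.
Lemma evM (p q : poly3 R) x : eval3 (p * q) x = eval3 p x * eval3 q x. Proof. by rewrite /eval3 !hornerE. Qed.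
Lemma evD (p q : poly3 R) x : eval3 (p + q) x = eval3 p x + eval3 q x. Proof. by rewrite /eval3 !hornerE. Qed.
Lemma evN (p : poly3 R) x : eval3 (- p) x = - eval3 p x. Proof. by rewrite /eval3 !hornerE. Qed.
Lemma evX (p : poly3 R) m x : eval3 (p ^+ m) x = eval3 p x ^+ m. Proof. by rewrite /eval3 !hornerE. Qed.
Lemma evnat m x : eval3 (m%:R : poly3 R) x = m%:R. Proof. by rewrite /eval3 !(hornerMn, hornerC, hornerE). Qed.
Lemma evkappa x : eval3 (kappa Tc Tm Tcm) x = kappa x.1.1 x.1.2 x.2.
Proof. by rewrite /kappa !evD !evN !evX !evM evTc evTm evTcm (evnat 4). Qed.
Lemma line_poly (a : C) (p : poly3 R) : exists q : {poly C}, forall t, eval3 p ((a, 0), t) = q.[t].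
Proof.
elim/poly_ind: p => [|p c [q hq]]; first by exists 0 => t; rewrite /eval3 !horner0.
exists (q * 'X + ((c.[0%:P]).[a])%:P) => t.
rewrite evD evM (_ : 'X = Tcm) // evTcm hq /= hornerD hornerMX hornerC /eval3 hornerC /=. congr (_ + _).
Qed.
Lemma zclosedI (Z1 Z2 : pt R -> Prop) : zclosed Z1 -> zclosed Z2 -> zclosed (fun x => Z1 x /\ Z2 x).
Proof.
move=> [S1 h1] [S2 h2]; exists (fun p => S1 p \/ S2 p) => x; split.
  by move=> [/h1 a /h2 b] p [/a|/b].
by move=> h; split; [apply/h1 => p ?; apply: h; left|apply/h2 => p ?; apply: h; right].
Qed.
Definition line (a : C) : pt R -> Prop := fun x => x.1.2 = 0 /\ x.1.1 = a.
Lemma line_closed a : zclosed (line a).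
Proof.
exists (fun p => p = Tm \/ p = Tc - cst a) => x; split.
  by move=> [h1 h2] p [->|->]; rewrite ?evTm // evD evN evTc evcst h2 subrr.
move=> h; split; first by rewrite -evTm; apply: h; left.
by apply/eqP; rewrite -subr_eq0 -(evTc x) -(evcst a x) -evN -evD; apply/eqP/h; right.
Qed.
Lemma notclosed_pt (Z : pt R -> Prop) x : zclosed Z -> ~ Z x ->
  exists p, (forall y, Z y -> eval3 p y = 0) /\ eval3 p x <> 0.
Proof.
move=> [S h] nz; have : ~ (forall p, S p -> eval3 p x = 0) by move/h.
move/not_all_ex_not => [p hp]; exists p; split.
  by move=> y /h; apply; apply: NNPP => c; apply: hp => /c.
by move=> e; apply: hp.
Qed.
Lemma line_irr a : zirreducible (line a).
Proof.
split; first exact: line_closed.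
split; first by exists ((a, 0), 0).
move=> Z1 Z2 c1 c2 hU.
have sub1 : forall x, Z1 x -> line a x by move=> x z; apply/hU; left.
have sub2 : forall x, Z2 x -> line a x by move=> x z; apply/hU; right.
apply: NNPP => hn; apply: (hn); left; move=> x; split; last exact: sub1.
move=> Lx; apply: NNPP => nZ1.
have [y [Ly nZ2y]] : exists y, line a y /\ ~ Z2 y.
  apply: NNPP => hh; apply: hn; right => z; split; last exact: sub2.
  by move=> Lz; apply: NNPP => nz; apply: hh; exists z.
have [p [hp px]] := notclosed_pt c1 nZ1.
have [p' [hp' py]] := notclosed_pt c2 nZ2y.
have [q hq] := line_poly a p; have [q' hq'] := line_poly a p'.
have ex : forall z, line a z -> z = ((a, 0), z.2).
  by move=> [[u v] w] [/= -> ->].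
have q0 : q != 0 by apply/eqP => e0; apply: px; rewrite (ex _ Lx) hq e0 horner0.
have q0' : q' != 0 by apply/eqP => e0; apply: py; rewrite (ex _ Ly) hq' e0 horner0.
have [t] := exists_nonroot (mulf_neq0 q0 q0'); rewrite hornerM; apply/negP/negPn/eqP.
have : line a ((a, 0), t) by [].
move/hU => [/hp | /hp']; rewrite ?hq ?hq' => ->; rewrite ?mul0r ?mulr0 //.
Qed.
Lemma maximal (X Y W : pt R -> Prop) : zclosed Y -> zclosed W ->
  (forall x, X x -> Y x \/ W x) -> (exists y, Y y /\ ~ W y) ->
  forall Z, zirreducible Z -> subsetP3 Y Z -> subsetP3 Z X -> forall x, Z x <-> Y x.
Proof.
move=> cY cW hXW [y [Yy nWy]] Z [cZ [_ irr]] YZ ZX.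
have := irr (fun x => Z x /\ Y x) (fun x => Z x /\ W x) (zclosedI cZ cY) (zclosedI cZ cW).
case.
- move=> x; split; last by case=> -[].
  by move=> Zx; case: (hXW _ (ZX _ Zx)) => h; [left|right].
- by move=> h x; split; [move/h => [] | move/YZ].
- by move=> h; exfalso; apply: nWy; have /h [] := YZ _ Yy.
Qed.
End P3.

Local Open Scope complex_scope.
Lemma demoivre (R : realType) (x : R) m :
  (cos x +i* sin x) ^+ m = cos (x *+ m) +i* sin (x *+ m).
Proof.
elim: m => [|m ih]; first by rewrite expr0 mulr0n cos0 sin0.
rewrite exprS ih mulrS cosD sinD /=. simpc; congr (_ +i* _); by rewrite addrC.
Qed.
Section Main.
Variable R : realType.
Local Notation C := R[i].
Variables (th : R).
Definition lam : C := cos th +i* sin th.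
Definition mu : C := cos th +i* (- sin th).
Lemma lammu : lam * mu = 1.
Proof. rewrite /lam /mu /=; simpc. rewrite -expr2 -[sin th * sin th]expr2 cos2Dsin2 [sin th * _]mulrC addNr complexr0; exact: rmorph1.
Qed.
Lemma lamPmu : lam + mu = (2 * cos th)%:C.
Proof. rewrite /lam /mu /=; simpc; apply/eqP; rewrite eq_complex /=; apply/andP; split; apply/eqP; ring. Qed.
Lemma lamBmu : lam - mu = 0 +i* (2 * sin th).
Proof. rewrite /lam /mu /=; simpc; apply/eqP; rewrite eq_complex /=; apply/andP; split; apply/eqP; ring. Qed.
End Main.
Lemma diag_pow (F : fieldType) (l m : F) k : (mk22 l 0 0 m) ^+ k = mk22 (l ^+ k) 0 0 (m ^+ k).
Proof.
elim: k => [|k ih]; first by rewrite !expr0 one22.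
by rewrite exprS ih; apply: eq22; rewrite !mul22 !mxE /= ?exprS; ring.
Qed.
Lemma rep_ok (F : fieldType) n (A B : 'M[F]_2) e :
  A ^+ n = e *: 1 -> e ^+ 2 = 1 -> \det B = 1 -> \tr B = 0 ->
  A ^+ n * (B ^+ 3)^-1 * A ^+ n * B^-1 = 1.
Proof.
move=> hA he hB tB.
have Bi : B^-1 = - B by rewrite inv22 // tB scale0r sub0r.
have BB : B * B = - 1 by rewrite CH22 tB hB scale0r scale1r sub0r.
have B3 : (B ^+ 3)^-1 = B.
  by rewrite -exprVn Bi exprS expr2 mulrNN BB mulrN1 opprK.
rewrite hA B3 Bi -scalerAl mul1r -scalerAl -scalerAr mulr1 scalerA -scalerAl mulrN BB opprK.
by rewrite -expr2 he scale1r.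
Qed.
Lemma span_full (F : fieldType) (l m : F) : l != m ->
  <<[:: 1; mk22 l 0 0 m; mk22 0 1 (-1) 0; mk22 0 1 (-1) 0 * mk22 l 0 0 m]>>%VS = fullv.
Proof.
move=> lm; have d0 : l - m != 0 by rewrite subr_eq0.
apply/vspaceP => M; rewrite memvf.
set A := mk22 l 0 0 m; set B := mk22 0 1 (-1) 0.
have -> : M = ((- M 0 0 * m + M 1 1 * l) / (l - m)) *: 1 + ((M 0 0 - M 1 1) / (l - m)) *: A
   + ((M 0 1 + M 1 0) * l / (l - m) - M 1 0) *: B + (- (M 0 1 + M 1 0) / (l - m)) *: (B * A).
  have BA : B * A = mk22 0 m (-l) 0 by apply: eq22; rewrite mul22 !mxE /=; ring.
  rewrite BA; apply: eq22; rewrite ?mxE /=; field; done.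
by repeat apply: memvD; apply: memvZ; apply: memv_span; rewrite !inE eqxx ?orbT.
Qed.
Lemma factor_mup (F : fieldType) (S : {poly F}) (a : F) : S != 0 ->
  exists r m, S = r * ('X - a%:P) ^+ m /\ ~~ root r a.
Proof.
move=> S0; set m := mup a S.
have d : ('X - a%:P) ^+ m %| S by rewrite -mup_geq.
exists (S %/ ('X - a%:P) ^+ m), m; split; first by rewrite divpK.
apply/negP => /factor_theorem [q hq].
have : ('X - a%:P) ^+ m.+1 %| S.
  by rewrite -(divpK d) hq -mulrA -exprS dvdp_mull.
by move=> h; have := @mup_leq _ a S m S0; rewrite leqnn h.
Qed.
Local Close Scope complex_scope.
Unset Implicit Arguments.
Theorem mainTheorem15 (R : realType) (n k : nat) :
  (2 <= n)%N -> (1 <= k)%N -> (k <= n - 1)%N ->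
  subsetP3 (Yk R n k) (charvar R n) /\
  irr_component (charvar R n) (Yk R n k) /\
  (exists A B : 'M[R[i]]_2,
      is_rep n A B /\ simple_rep A B /\ Yk R n k (char_pt A B)).
Proof.
case: n => [//|n'] n2 k1 kn.
set th : R := pi * k%:R / n'.+1%:R.
set a : R[i] := ((2 * cos th) +i* 0)%C.
have n0 : (n'.+1%:R : R) != 0 by rewrite pnatr_eq0.
have thpos : 0 < th.
  by rewrite /th divr_gt0 ?mulr_gt0 ?pi_gt0 ?ltr0n //; lia.
have thpi : th < pi.
  rewrite /th ltr_pdivrMr ?ltr0n // ltr_pM2l ?pi_gt0 // ltr_nat; lia.
have sinpos : 0 < sin th by apply: sin_gt0_pi; rewrite thpos thpi.
have lm : lam th != mu th.
  rewrite -subr_eq0 lamBmu eq_complex /= negb_and; apply/orP; right.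
  by rewrite mulf_eq0 pnatr_eq0 /= (gt_eqF sinpos).
have tn : th *+ n'.+1 = pi *+ k.
  by rewrite -mulr_natr /th divfK // mulr_natr.
have sk : sin (pi *+ k : R) = 0.
  by have := alternatingn (@sinDpi R) k 0; rewrite add0r sin0 mulr0.
set e : R[i] := ((cos (pi *+ k)) +i* 0)%C.
have lamn : lam th ^+ n'.+1 = e by rewrite /lam demoivre tn sk.
have mun : mu th ^+ n'.+1 = e.
  by rewrite /mu -sinN -cosN demoivre mulNrn cosN sinN tn sk oppr0.
have e2 : e ^+ 2 = 1.
  rewrite /e expr2 /=; simpc; rewrite -expr2.
  have := cos2Dsin2 (pi *+ k : R); rewrite sk expr0n /= addr0 => ->.
  by rewrite complexr0; exact: rmorph1.
set A := mk22 (lam th) 0 0 (mu th).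
have hA : \det A = 1 by rewrite det22 !mxE /= mulr0 subr0 lammu.
have tA : \tr A = a by rewrite tr22 !mxE /= lamPmu.
have An : A ^+ n'.+1 = e *: 1.
  by rewrite diag_pow lamn mun; apply: eq22; rewrite !mxE /= ?mulr1 ?mulr0.
have realize : forall t3 : R[i], exists B, is_rep n'.+1 A B /\ char_pt A B = ((a, 0), t3).
  move=> t3; set xB := t3 / (lam th - mu th).
  set B := mk22 xB 1 (-1 - xB ^+ 2) (- xB).
  have hB : \det B = 1 by rewrite det22 !mxE /=; ring.
  have tB : \tr B = 0 by rewrite tr22 !mxE /= subrr.
  exists B; split; first by split; [|split] => //; apply: (rep_ok An e2 hB tB).
  rewrite /char_pt tA tB tr22 !mul22 !mxE /=.
  have d0 : lam th - mu th != 0 by rewrite subr_eq0.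
  congr (_, _); rewrite /xB; field; done.
have sub : subsetP3 (Yk R n'.+1 k) (charvar R n'.+1).
  move=> [[u v] w] [/= -> ->]; have [B [h1 h2]] := realize w.
  by exists A, B; split.
split; first exact: sub.
split; last first.
  set B0 := mk22 (0 : R[i]) 1 (-1) 0.
  have hB : \det B0 = 1 by rewrite det22 !mxE /=; ring.
  have tB : \tr B0 = 0 by rewrite tr22 !mxE /= addr0.
  exists A, B0; split; first by split; [|split] => //; apply: (rep_ok An e2 hB tB).
  split.
    exists [:: 1; A; B0; B0 * A]; split; last exact: span_full.
    move=> M; rewrite !inE => /or4P [] /eqP ->.
    - exact: img1.
    - by have := imgA (img1 A B0); rewrite mulr1.
    - by have := imgB (img1 A B0); rewrite mulr1.
    - by apply: imgB; have := imgA (img1 A B0); rewrite mulr1.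
  by split; rewrite /char_pt /= ?tB ?tA.
split; first exact: (@line_irr R a).
split; first exact: sub.
pose S := cheb R[i] n'.+1.
have S0 : S != 0.
  apply/eqP => h; have := (cheb2 R[i] n').2; rewrite -/S h horner0 => /eqP.
  by rewrite eq_sym pnatr_eq0.
have [r [m [hS nr]]] := factor_mup a S0.
pose W := fun x : pt R => kappa x.1.1 x.1.2 x.2 * x.1.2 = 0 /\
                          kappa x.1.1 x.1.2 x.2 * r.[x.1.1] * x.2 = 0.
apply: (@maximal R _ _ W).
- exact: (@line_closed R a).
- exists (fun p => p = kappa (Tc R) (Tm R) (Tcm R) * Tm R \/
                   p = kappa (Tc R) (Tm R) (Tcm R) * liftc r * Tcm R) => x.
  rewrite /W; split.
    by move=> [h1 h2] p [->|->]; rewrite !evM evkappa ?evlift ?evTm ?evTcm.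
  move=> h; split.
    by have := h _ (or_introl erefl); rewrite evM evkappa evTm.
  by have := h _ (or_intror erefl); rewrite !evM evkappa evTcm evlift.
- move=> x [A' [B' [[hA' [hB' rel]] <-]]]; rewrite /char_pt /=.
  case: (eqVneq (\tr B') 0) => tB.
    have h := case_z hA' hB' rel tB.
    case: (eqVneq (\tr A') a) => tA'; first by left; split.
    right; split; first by rewrite tB mulr0.
    move: h; rewrite -/S hS !hornerE => /eqP; rewrite mulf_eq0 mulf_eq0 orbAC.
    rewrite expf_eq0 subr_eq0 (negbTE tA') andbF orbF -mulf_eq0 => /eqP h.
    by rewrite -mulrA h mulr0.
  have h := case_nz hA' hB' rel tB.
  have e0 : kappa (\tr A') (\tr B') (\tr (A' * B')) = 0 := h.
  by right; rewrite /W /= e0 !mul0r.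
- exists ((a, 0), 3); split; first by split.
  rewrite /W /= => -[_]; apply/eqP.
  rewrite !mulf_neq0 //; last by rewrite pnatr_eq0.
  have -> : kappa a 0 3 = a ^+ 2 + 5 by rewrite /kappa; ring.
  have a2 : 0 <= a ^+ 2.
    by rewrite /a complexr0 -rmorphXn -(rmorph0 (real_complex R)) lecR sqr_ge0.
  by rewrite gt_eqF // ltr_wpDl ?ltr0n.
Qed.
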